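(* Let $G$ be a domino-free bipartite graph with no universal vertex, and let $\mathbf{H}(G)$ be the transitive reduction of $(\mathcal{B}(G),\preceq)$. Then every cycle of (the underlying undirected graph of) $\mathbf{H}(G)$ that does not contain $\bot$ or $\top$ has at least six non-flow-nodes.
   Context: A domino is $C_6$ plus a chord between two antipodal vertices; domino-free means no induced domino. With color classes $X,Y$, a biclique is a vertex set inducing a complete bipartite subgraph, with shores $X(B)=B\cap X$, $Y(B)=B\cap Y$; $\mathcal{B}(G)$ is the set of inclusion-wise maximal bicliques ordered by $B\preceq B'\iff X(B)\subseteq X(B')$. $\bot,\top$ are the added bottom and top elements of the Galois lattice $\mathcal{B}(G)\cup\{\bot,\top\}$. The transitive reduction has an arc $B\to B'$ iff $B'$ covers $B$. For a cycle $C$ in a directed graph (a cycle in the underlying undirected graph), a node of $C$ is a flow-node if of its two arcs in $C$ one enters and one leaves it; otherwise (both enter or both leave) it is a non-flow-node (a sink or source of $C$). A universal vertex is adjacent to all vertices of the opposite color class. *)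

(* Defs.v *)
From mathcomp Require Import all_boot.
Set Implicit Arguments. Unset Strict Implicit. Unset Printing Implicit Defensive.

(* A finite bipartite graph on vertex type T: adjacency e, colour class X,
   the other colour class being Y := ~: X. *)
Definition bipartite_graph (T : finType) (e : rel T) (X : {set T}) : Prop :=
  [/\ symmetric e, irreflexive e &
      forall x y, e x y -> (x \in X) != (y \in X)].

(* Adjacency of the domino: the 6-cycle 0-1-2-3-4-5-0 plus the chord 0-3. *)
Definition domino_adj (i j : 'I_6) : bool :=
  [|| (i.+1 %% 6 == j), (j.+1 %% 6 == i),
      ((i == 0 :> nat) && (j == 3 :> nat)) | ((i == 3 :> nat) && (j == 0 :> nat))].

Definition domino_free (T : finType) (e : rel T) : Prop :=
  ~ exists f : 'I_6 -> T, injective f /\ forall i j, e (f i) (f j) = domino_adj i j.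

Definition has_universal_vertex (T : finType) (e : rel T) (X : {set T}) : Prop :=
  exists v : T, forall w : T, (v \in X) != (w \in X) -> e v w.

(* Biclique: vertex set with both shores nonempty, inducing a complete
   bipartite graph (shores X(B) = B :&: X, Y(B) = B :\: X). *)
Definition biclique (T : finType) (e : rel T) (X : {set T}) (B : {set T}) : bool :=
  [&& B :&: X != set0, B :\: X != set0 &
      [forall x in B :&: X, forall y in B :\: X, e x y]].

Definition maxbiclique (T : finType) (e : rel T) (X : {set T}) (B : {set T}) : bool :=
  biclique e X B &&
  [forall B' : {set T}, biclique e X B' ==> (B \subset B') ==> (B' == B)].

Definition bprec (T : finType) (X : {set T}) (B B' : {set T}) : bool :=
  B :&: X \subset B' :&: X.

(* B' covers B in (B(G), <=): arc B -> B' of the transitive reduction H(G). *)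
Definition hcover (T : finType) (e : rel T) (X : {set T}) (B B' : {set T}) : bool :=
  [&& maxbiclique e X B, maxbiclique e X B', bprec X B B', B != B' &
      [forall C : {set T}, maxbiclique e X C ==> bprec X B C ==> bprec X C B'
                            ==> (C == B) || (C == B')]].

(* A cycle of the underlying undirected graph of H(G), given as the cyclic
   sequence s of its (distinct, at least 3) nodes. *)
Definition hcycle (T : finType) (e : rel T) (X : {set T}) (s : seq {set T}) : Prop :=
  [/\ uniq s, 2 < size s, all (maxbiclique e X) s &
      forall i, i < size s ->
        hcover e X (nth set0 s i) (nth set0 s (i.+1 %% size s)) \/
        hcover e X (nth set0 s (i.+1 %% size s)) (nth set0 s i)].

Definition edge_fwd (T : finType) (e : rel T) (X : {set T}) (s : seq {set T}) (i : nat) : bool :=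
  hcover e X (nth set0 s (i %% size s)) (nth set0 s (i.+1 %% size s)).

(* Number of non-flow nodes: node s_{i+1} lies between edges i and i+1, and
   is a non-flow node iff those two edges have different orientations
   along the cycle (both enter or both leave it). *)
Definition non_flow_count (T : finType) (e : rel T) (X : {set T}) (s : seq {set T}) : nat :=
  count (fun i => edge_fwd e X s i != edge_fwd e X s i.+1) (iota 0 (size s)).

(* Main.v *)
Require Import Defs.
From mathcomp Require Import all_boot zify.
Set Implicit Arguments. Unset Strict Implicit. Unset Printing Implicit Defensive.

Section Bic.
Variable T : finType.
Variable e : rel T.
Variable X : {set T}.
Hypothesis bip : bipartite_graph e X.

Lemma e_sym x y : e x y = e y x.
Proof. by case: bip => /(_ x y). Qed.

Lemma e_col x y : e x y -> (x \in X) != (y \in X).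
Proof. by case: bip => _ _; apply. Qed.

Lemma sameX x y : x \in X -> y \in X -> e x y = false.
Proof. by move=> hx hy; apply/negbTE/negP => /e_col; rewrite hx hy. Qed.

Lemma sameY x y : x \notin X -> y \notin X -> e x y = false.
Proof. by move=> hx hy; apply/negbTE/negP => /e_col; rewrite (negbTE hx) (negbTE hy). Qed.

Lemma mb_bic B : maxbiclique e X B -> biclique e X B.
Proof. by case/andP. Qed.

Lemma mb_X B : maxbiclique e X B -> exists x, x \in B /\ x \in X.
Proof. by case/andP=> /and3P[/set0Pn[x]]; rewrite inE => /andP[]; exists x. Qed.

Lemma mb_Y B : maxbiclique e X B -> exists y, y \in B /\ y \notin X.
Proof. by case/andP=> /and3P[_ /set0Pn[y]]; rewrite inE => /andP[]; exists y. Qed.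

Lemma bic_edge B x y : biclique e X B -> x \in B -> x \in X -> y \in B -> y \notin X -> e x y.
Proof.
case/and3P=> _ _ /forallP H hx hX hy hY.
by move: (H x); rewrite inE hx hX /= => /forallP /(_ y); rewrite inE hy hY.
Qed.

Lemma mb_edge B x y : maxbiclique e X B -> x \in B -> x \in X -> y \in B -> y \notin X -> e x y.
Proof. by move/mb_bic; apply: bic_edge. Qed.

Lemma mb_max B B' : maxbiclique e X B -> biclique e X B' -> B \subset B' -> B' = B.
Proof. by case/andP=> _ /forallP/(_ B') H b s; apply/eqP; move: H; rewrite b s. Qed.

Lemma addX B w : maxbiclique e X B -> w \in X ->
  (forall y, y \in B -> y \notin X -> e w y) -> w \in B.
Proof.
move=> mB wX H.
have bB := mb_bic mB.
suff <- : w |: B = B by rewrite setU11.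
apply: mb_max => //; last by apply: subsetUr.
case/and3P: (bB) => nX nY /forallP C; apply/and3P; split.
- case/set0Pn: nX => z; rewrite inE => /andP[zB zX]; apply/set0Pn; exists z.
  by rewrite !inE zB orbT.
- case/set0Pn: nY => z; rewrite inE => /andP[zX zB]; apply/set0Pn; exists z.
  by rewrite !inE zB zX orbT.
- apply/forallP => x; apply/implyP; rewrite !inE => /andP[/orP[/eqP->|xB] xX].
  + apply/forallP => y; apply/implyP; rewrite !inE => /andP[yX /orP[/eqP yw|yB]].
    * by rewrite yw wX in yX.
    * by apply: H.
  + apply/forallP => y; apply/implyP; rewrite !inE => /andP[yX /orP[/eqP yw|yB]].
    * by rewrite yw wX in yX.
    * by apply: (bic_edge bB).
Qed.

Lemma addY B w : maxbiclique e X B -> w \notin X ->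
  (forall x, x \in B -> x \in X -> e x w) -> w \in B.
Proof.
move=> mB wX H.
have bB := mb_bic mB.
suff <- : w |: B = B by rewrite setU11.
apply: mb_max => //; last by apply: subsetUr.
case/and3P: (bB) => nX nY /forallP C; apply/and3P; split.
- case/set0Pn: nX => z; rewrite inE => /andP[zB zX]; apply/set0Pn; exists z.
  by rewrite !inE zB orbT.
- case/set0Pn: nY => z; rewrite inE => /andP[zX zB]; apply/set0Pn; exists z.
  by rewrite !inE zB zX orbT.
- apply/forallP => x; apply/implyP; rewrite !inE => /andP[/orP[/eqP xw|xB] xX].
  + by rewrite xw (negbTE wX) in xX.
  + apply/forallP => y; apply/implyP; rewrite !inE => /andP[yX /orP[/eqP->|yB]].
    * by apply: H.
    * by apply: (bic_edge bB).
Qed.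

Lemma bprecX B B' x : bprec X B B' -> x \in B -> x \in X -> x \in B'.
Proof. by move/subsetP => /(_ x); rewrite !inE => H a b; by case/andP: (H (introT andP (conj a b))). Qed.

Lemma bprecY B B' y : maxbiclique e X B -> maxbiclique e X B' -> bprec X B B' ->
  y \in B' -> y \notin X -> y \in B.
Proof.
move=> mB mB' P yB yX; apply: addY => // x xB xX.
by apply: (mb_edge mB') => //; apply: bprecX P _ _.
Qed.

Lemma bprec_trans A B C : bprec X A B -> bprec X B C -> bprec X A C.
Proof. exact: subset_trans. Qed.

Lemma bprec_refl A : bprec X A A.
Proof. exact: subxx. Qed.

Lemma bprec_anti A B : maxbiclique e X A -> maxbiclique e X B ->
  bprec X A B -> bprec X B A -> A = B.
Proof.
move=> mA mB P Q; apply/setP => z.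
case: (boolP (z \in X)) => zX.
- by apply/idP/idP => h; [apply: bprecX P _ _ | apply: bprecX Q _ _].
- by apply/idP/idP => h; [apply: (bprecY mB mA Q) | apply: (bprecY mA mB P)].
Qed.


Lemma notin_Y B x : maxbiclique e X B -> x \in X -> x \notin B ->
  exists y, [/\ y \in B, y \notin X & ~~ e x y].
Proof.
move=> mB xX xB.
case: (boolP [forall y, (y \in B) && (y \notin X) ==> e x y]) => [/forallP H|].
- by rewrite (addX mB xX) in xB => // y yB yX; move: (H y); rewrite yB yX.
- case/forallPn => y; rewrite negb_imply => /andP[/andP[yB yX] ne].
  by exists y.
Qed.

Hypothesis dom : domino_free e.

Definition dmap (x y x1 y1 x2 y2 : T) (i : 'I_6) : T :=
  match val i with 0 => x | 1 => y1 | 2 => x1 | 3 => y | 4 => x2 | _ => y2 end.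

Lemma domino_rows (i j : 'I_6) : i != j -> exists k : 'I_6, domino_adj i k != domino_adj j k.
Proof.
case: i j => [[|[|[|[|[|[|i]]]]]] Hi] // [[|[|[|[|[|[|j]]]]]] Hj] // ne;
try by rewrite eqxx in ne.
all: by [exists (@Ordinal 6 0 isT) | exists (@Ordinal 6 1 isT) | exists (@Ordinal 6 2 isT)
 | exists (@Ordinal 6 3 isT) | exists (@Ordinal 6 4 isT) | exists (@Ordinal 6 5 isT)].
Qed.


Lemma comparable A B x y : maxbiclique e X A -> maxbiclique e X B ->
  x \in X -> x \in A -> x \in B -> y \notin X -> y \in A -> y \in B ->
  bprec X A B \/ bprec X B A.
Proof.
move=> mA mB xX xA xB yX yA yB.
case: (boolP (bprec X A B)) => [|nAB]; first by left.
case: (boolP (bprec X B A)) => [|nBA]; first by right.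
exfalso.
case/subsetPn: nAB => x1; rewrite !inE => /andP[x1A x1X].
rewrite x1X andbT => x1B.
case/subsetPn: nBA => x2; rewrite !inE => /andP[x2B x2X].
rewrite x2X andbT => x2A.
have [y2 [y2B y2X n12]] := notin_Y mB x1X x1B.
have [y1 [y1A y1X n21]] := notin_Y mA x2X x2A.
apply: dom; exists (dmap x y x1 y1 x2 y2).
have Ey1 : e x y by apply: (mb_edge mA).
have Ey2 : e x y1 by apply: (mb_edge mA).
have Ey3 : e x y2 by apply: (mb_edge mB).
have Ey4 : e x1 y by apply: (mb_edge mA).
have Ey5 : e x1 y1 by apply: (mb_edge mA).
have Ey6 : e x2 y by apply: (mb_edge mB).
have Ey7 : e x2 y2 by apply: (mb_edge mB).
have N1 : e x1 y2 = false by apply/negbTE.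
have N2 : e x2 y1 = false by apply/negbTE.
have adj : forall i j, e (dmap x y x1 y1 x2 y2 i) (dmap x y x1 y1 x2 y2 j) = domino_adj i j.
  case=> [[|[|[|[|[|[|i]]]]]] Hi] //; case=> [[|[|[|[|[|[|j]]]]]] Hj] //;
  rewrite /dmap /domino_adj /=;
  rewrite ?Ey1 ?Ey2 ?Ey3 ?Ey4 ?Ey5 ?Ey6 ?Ey7 ?N1 ?N2 //;
  rewrite ?[e y _]e_sym ?[e y1 _]e_sym ?[e y2 _]e_sym;
  rewrite ?Ey1 ?Ey2 ?Ey3 ?Ey4 ?Ey5 ?Ey6 ?Ey7 ?N1 ?N2 //;
  first [ by apply: sameX | by apply: sameY ].
split => // i j Eij; apply/eqP; apply: contraT => nij.
have [k] := domino_rows nij.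
by rewrite -!adj Eij eqxx.
Qed.


Lemma hc_mb1 a b : hcover e X a b -> maxbiclique e X a.
Proof. by case/and5P. Qed.
Lemma hc_mb2 a b : hcover e X a b -> maxbiclique e X b.
Proof. by case/and5P. Qed.
Lemma hc_prec a b : hcover e X a b -> bprec X a b.
Proof. by case/and5P. Qed.
Lemma hc_neq a b : hcover e X a b -> a != b.
Proof. by case/and5P. Qed.
Lemma hc_cov a b C : hcover e X a b -> maxbiclique e X C -> bprec X a C -> bprec X C b ->
  C = a \/ C = b.
Proof.
case/and5P=> _ _ _ _ /forallP /(_ C) H mC P Q.
by move: H; rewrite mC P Q /= => /orP[/eqP|/eqP]; [left|right].
Qed.

Lemma low_disj a b t x : hcover e X a t -> hcover e X b t -> a != b ->
  x \in a -> x \in X -> x \in b -> False.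
Proof.
move=> Ha Hb nab xa xX xb.
have [y [yt yX]] := mb_Y (hc_mb2 Ha).
have ya := bprecY (hc_mb1 Ha) (hc_mb2 Ha) (hc_prec Ha) yt yX.
have yb := bprecY (hc_mb1 Hb) (hc_mb2 Hb) (hc_prec Hb) yt yX.
case: (comparable (hc_mb1 Ha) (hc_mb1 Hb) xX xa xb yX ya yb) => P.
- case: (hc_cov Ha (hc_mb1 Hb) P (hc_prec Hb)) => E.
  + by rewrite E eqxx in nab.
  + by move: (hc_neq Hb); rewrite E eqxx.
- case: (hc_cov Hb (hc_mb1 Ha) P (hc_prec Ha)) => E.
  + by rewrite E eqxx in nab.
  + by move: (hc_neq Ha); rewrite E eqxx.
Qed.

Lemma up_disj u c d y : hcover e X u c -> hcover e X u d -> c != d ->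
  y \in c -> y \notin X -> y \in d -> False.
Proof.
move=> Hc Hd ncd yc yX yd.
have [x [xu xX]] := mb_X (hc_mb1 Hc).
have xc := bprecX (hc_prec Hc) xu xX.
have xd := bprecX (hc_prec Hd) xu xX.
case: (comparable (hc_mb2 Hc) (hc_mb2 Hd) xX xc xd yX yc yd) => P.
- case: (hc_cov Hd (hc_mb2 Hc) (hc_prec Hc) P) => E.
  + by move: (hc_neq Hc); rewrite E eqxx.
  + by rewrite E eqxx in ncd.
- case: (hc_cov Hc (hc_mb2 Hd) (hc_prec Hd) P) => E.
  + by move: (hc_neq Hd); rewrite E eqxx.
  + by rewrite E eqxx in ncd.
Qed.

Lemma extend B0 : biclique e X B0 -> exists M, maxbiclique e X M /\ B0 \subset M.
Proof.
move=> b0.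
have P0 : biclique e X B0 && (B0 \subset B0) by rewrite b0 subxx.
case: (@arg_maxnP _ B0 (fun B => biclique e X B && (B0 \subset B)) (fun B => #|B|) P0).
move=> M /andP[bM sM] Hmax; exists M; split => //.
apply/andP; split => //; apply/forallP => B'; apply/implyP => bB'; apply/implyP => sMB'.
have := Hmax B'; rewrite bB' (subset_trans sM sMB') => /(_ isT) le.
by rewrite eq_sym eqEcard sMB' /=; exact: le.
Qed.

Lemma K2abs a b t S : hcover e X a t -> hcover e X b t -> a != b ->
  maxbiclique e X S -> bprec X S a -> bprec X S b -> False.
Proof.
move=> Ha Hb nab mS Pa Pb.
have [x [xS xX]] := mb_X mS.
exact: (low_disj Ha Hb nab (bprecX Pa xS xX) xX (bprecX Pb xS xX)).
Qed.

Lemma K4abs u1 u2 t1 t2 a1 b1 c d :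
  hcover e X a1 t1 -> hcover e X b1 t1 -> a1 != b1 ->
  bprec X u1 a1 -> bprec X u2 b1 ->
  hcover e X u1 c -> hcover e X u1 d -> c != d ->
  bprec X c t1 -> bprec X d t2 ->
  bprec X u1 t1 -> bprec X u2 t1 -> bprec X u1 t2 -> bprec X u2 t2 ->
  maxbiclique e X u2 -> maxbiclique e X t2 -> False.
Proof.
move=> Ha Hb nab Pa Pb Hc Hd ncd Pc Pd P11 P21 P12 P22 mu2 mt2.
have mu1 := hc_mb1 Hc; have mt1 := hc_mb2 Ha.
have [x1 [x1u x1X]] := mb_X mu1.
have [x2 [x2u x2X]] := mb_X mu2.
have [y1 [y1t y1X]] := mb_Y mt1.
have [y2 [y2t y2X]] := mb_Y mt2.
have E11 : e x1 y1 by apply: (mb_edge mt1) => //; apply: bprecX P11 _ _.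
have E21 : e x2 y1 by apply: (mb_edge mt1) => //; apply: bprecX P21 _ _.
have E12 : e x1 y2 by apply: (mb_edge mt2) => //; apply: bprecX P12 _ _.
have E22 : e x2 y2 by apply: (mb_edge mt2) => //; apply: bprecX P22 _ _.
have b0 : biclique e X [set x1; x2; y1; y2].
  apply/and3P; split.
  - by apply/set0Pn; exists x1; rewrite !inE eqxx x1X.
  - by apply/set0Pn; exists y1; rewrite !inE eqxx y1X orbT.
  - apply/forallP => x; apply/implyP; rewrite !inE => /andP[hx xX].
    apply/forallP => y; apply/implyP; rewrite !inE => /andP[yX hy].
    move: hx; rewrite -!orbA => /or4P[] /eqP ?; subst x;
    move: hy; rewrite -!orbA => /or4P[] /eqP ?; subst y;
    by [ | rewrite x1X in yX | rewrite x2X in yX | rewrite (negbTE y1X) in xX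
         | rewrite (negbTE y2X) in xX].
have [M [mM sM]] := extend b0.
have x1M : x1 \in M by apply: (subsetP sM); rewrite !inE eqxx.
have x2M : x2 \in M by apply: (subsetP sM); rewrite !inE eqxx orbT.
have y1M : y1 \in M by apply: (subsetP sM); rewrite !inE eqxx !orbT.
have y2M : y2 \in M by apply: (subsetP sM); rewrite !inE eqxx !orbT.
have x1t1 := bprecX P11 x1u x1X.
have x2t1 := bprecX P21 x2u x2X.
have [Mt1 nMt1] : bprec X M t1 /\ M != t1.
  have nt1M : ~ bprec X t1 M.
    move=> P; have y2t1 := bprecY mt1 mM P y2M y2X.
    have y2d := bprecY (hc_mb2 Hd) mt2 Pd y2t y2X.
    have y2c := bprecY (hc_mb2 Hc) mt1 Pc y2t1 y2X.
    exact: (up_disj Hc Hd ncd y2c y2X y2d).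
  case: (comparable mM mt1 x1X x1M x1t1 y1X y1M y1t) => // P.
  split => //; apply/eqP => E; apply: nt1M; rewrite E; exact: bprec_refl.
have y1a := bprecY (hc_mb1 Ha) mt1 (hc_prec Ha) y1t y1X.
have y1b := bprecY (hc_mb1 Hb) mt1 (hc_prec Hb) y1t y1X.
have x1a := bprecX Pa x1u x1X.
have x2b := bprecX Pb x2u x2X.
have Ma : bprec X M a1.
  case: (comparable mM (hc_mb1 Ha) x1X x1M x1a y1X y1M y1a) => // P.
  case: (hc_cov Ha mM P Mt1) => E; first by rewrite E; exact: bprec_refl.
  by rewrite E eqxx in nMt1.
have Mb : bprec X M b1.
  case: (comparable mM (hc_mb1 Hb) x2X x2M x2b y1X y1M y1b) => // P.
  case: (hc_cov Hb mM P Mt1) => E; first by rewrite E; exact: bprec_refl.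
  by rewrite E eqxx in nMt1.
exact: (low_disj Ha Hb nab (bprecX Ma x1M x1X) x1X (bprecX Mb x1M x1X)).
Qed.


Variable s : seq {set T}.
Hypothesis hc : hcycle e X s.

Local Notation n := (size s).
Definition v i := nth set0 s (i %% n).
Definition f i := edge_fwd e X s i.

Lemma n_gt2 : 2 < n.
Proof. by case: hc => _ H _ _. Qed.
Lemma n_gt0 : 0 < n.
Proof. exact: ltnW (ltnW n_gt2). Qed.

Lemma v_per i : v (i + n) = v i.
Proof. by rewrite /v modnDr. Qed.

Lemma modS i : (i %% n).+1 %% n = i.+1 %% n.
Proof. by rewrite -[(i %% n).+1]addn1 -[i.+1]addn1 modnDml. Qed.

Lemma f_mod i : f i = f (i %% n).
Proof. by rewrite /f /edge_fwd modn_mod modS. Qed.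

Lemma f_per i : f (i + n) = f i.
Proof. by rewrite f_mod modnDr -f_mod. Qed.

Lemma covT i : f i -> hcover e X (v i) (v i.+1).
Proof. by []. Qed.

Lemma covF i : f i = false -> hcover e X (v i.+1) (v i).
Proof.
case: hc => _ _ _ /(_ (i %% n) (ltn_pmod i n_gt0)); rewrite modS => H.
by rewrite /f /edge_fwd => E; case: H => //; rewrite E.
Qed.

Lemma mbv i : maxbiclique e X (v i).
Proof.
case: hc => _ _ /allP H _; apply: H; apply: mem_nth; exact: ltn_pmod n_gt0.
Qed.

Lemma vne2 m : v m != v m.+2.
Proof.
case: hc => U _ _ _; rewrite /v nth_uniq ?ltn_pmod ?n_gt0 //.
rewrite -[m.+2]addn2 -[X in X %% n == _]addn0 eqn_modDl mod0n modn_small //; exact: n_gt2.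
Qed.

Lemma runT a m : (forall i, i < m -> f (a + i)) ->
  forall i j, i <= j -> j <= m -> bprec X (v (a + i)) (v (a + j)).
Proof.
move=> H i j; elim: j => [|j IH] lij ljm.
  by rewrite leqn0 in lij; rewrite (eqP lij); exact: bprec_refl.
case: (ltnP j.+1 i) => [//|]; first by rewrite ltnNge lij.
rewrite leq_eqVlt => /orP[/eqP->|lt]; first exact: bprec_refl.
have := hc_prec (covT (H j ljm)); rewrite -addnS => P.
exact: bprec_trans (IH lt (ltnW ljm)) P.
Qed.

Lemma runF a m : (forall i, i < m -> f (a + i) = false) ->
  forall i j, i <= j -> j <= m -> bprec X (v (a + j)) (v (a + i)).
Proof.
move=> H i j; elim: j => [|j IH] lij ljm.
  by rewrite leqn0 in lij; rewrite (eqP lij); exact: bprec_refl.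
case: (ltnP j.+1 i) => [//|]; first by rewrite ltnNge lij.
rewrite leq_eqVlt => /orP[/eqP->|lt]; first exact: bprec_refl.
have := hc_prec (covF (H j ljm)); rewrite -addnS => P.
exact: bprec_trans P (IH lt (ltnW ljm)).
Qed.


Lemma parity m : odd (count (fun i => f i != f i.+1) (iota 0 m)) = (f 0 != f m).
Proof.
elim: m => [|m IH]; first by rewrite /= eqxx.
rewrite -[m.+1]addn1 iotaD count_cat oddD IH /= addn0 add0n addn1.
by case: (f 0); case: (f m); case: (f m.+1).
Qed.

Lemma K2comb b p q : 0 < p -> 0 < q -> p + q = n ->
  (forall i, i < p -> f (b + i)) -> (forall i, i < q -> f (b + p + i) = false) -> False.
Proof.
move=> p0 q0 pq H1 H2.
have Ha : hcover e X (v (b + p.-1)) (v (b + p)).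
  have E : (b + p.-1).+1 = b + p by lia.
  by rewrite -E; apply: covT; apply: H1; lia.
have Hb : hcover e X (v (b + p).+1) (v (b + p)).
  by apply: covF; have := H2 0 q0; rewrite addn0.
have nab : v (b + p.-1) != v (b + p).+1.
  have E : (b + p.-1).+2 = (b + p).+1 by lia.
  by rewrite -E; apply: vne2.
have Pa : bprec X (v b) (v (b + p.-1)).
  by have := runT H1 (i:=0) (j:=p.-1); rewrite addn0; apply; lia.
have Pb : bprec X (v b) (v (b + p).+1).
  have := runF H2 (i:=1) (j:=q); rewrite -addnA pq v_per addn1; apply; lia.
exact: K2abs Ha Hb nab (mbv b) Pa Pb.
Qed.


Lemma K4comb b p1 q1 p2 q2 : 0 < p1 -> 0 < q1 -> 0 < p2 -> 0 < q2 ->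
  p1 + q1 + p2 + q2 = n ->
  (forall i, i < p1 -> f (b + i)) ->
  (forall i, i < q1 -> f (b + p1 + i) = false) ->
  (forall i, i < p2 -> f (b + p1 + q1 + i)) ->
  (forall i, i < q2 -> f (b + p1 + q1 + p2 + i) = false) -> False.
Proof.
move=> p0 q0 p20 q20 sum.
have E1 : (b + p1.-1).+1 = b + p1 by lia.
have E2 : (b + p1.-1).+2 = (b + p1).+1 by lia.
have E3 : ((b + n).-1).+1 = b + n by have := n_gt0; lia.
have E4 : (b + n).-1 = b + p1 + q1 + p2 + q2.-1 by lia.
have E5 : ((b + n).-1).+2 = b.+1 + n by have := n_gt0; lia.
have E6 : b + p1 + q1 + p2 + q2 = b + n by lia.
have L1 : p1.-1 < p1 by lia.
have L2 : q2.-1 < q2 by lia.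
move=> H1 H2 H3 H4.
have Ha : hcover e X (v (b + p1.-1)) (v (b + p1)).
  by rewrite -E1; apply: covT; apply: H1.
have Hb : hcover e X (v (b + p1).+1) (v (b + p1)).
  by apply: covF; have := H2 0 q0; rewrite addn0.
have nab : v (b + p1.-1) != v (b + p1).+1.
  by rewrite -E2; apply: vne2.
have Pa : bprec X (v b) (v (b + p1.-1)).
  by have := runT H1 (i:=0) (j:=p1.-1); rewrite addn0; apply => //; apply: ltnW.
have Pb : bprec X (v (b + p1 + q1)) (v (b + p1).+1).
  by have := runF H2 (i:=1) (j:=q1); rewrite addn1; apply.
have Hc : hcover e X (v b) (v b.+1).
  by have := covT (H1 0 p0); rewrite addn0.
have Hd : hcover e X (v b) (v (b + n).-1).
  rewrite -(v_per b) -E3; apply: covF.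
  by rewrite E4; apply: H4.
have ncd : v b.+1 != v (b + n).-1.
  rewrite eq_sym -(v_per b.+1).
  by rewrite -E5; apply: vne2.
have Pc : bprec X (v b.+1) (v (b + p1)).
  by have := runT H1 (i:=1) (j:=p1); rewrite addn1; apply.
have Pd : bprec X (v (b + n).-1) (v (b + p1 + q1 + p2)).
  by have := runF H4 (i:=0) (j:=q2.-1); rewrite addn0 -E4; apply => //; apply: ltnW.
have P11 : bprec X (v b) (v (b + p1)).
  by have := runT H1 (i:=0) (j:=p1); rewrite addn0; apply.
have P21 : bprec X (v (b + p1 + q1)) (v (b + p1)).
  by have := runF H2 (i:=0) (j:=q1); rewrite addn0; apply.
have P12 : bprec X (v b) (v (b + p1 + q1 + p2)).
  by have := runF H4 (i:=0) (j:=q2); rewrite addn0 E6 v_per; apply.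
have P22 : bprec X (v (b + p1 + q1)) (v (b + p1 + q1 + p2)).
  by have := runT H3 (i:=0) (j:=p2); rewrite addn0; apply.
exact: K4abs Ha Hb nab Pa Pb Hc Hd ncd Pc Pd P11 P21 P12 P22 (mbv _) (mbv _).
Qed.


Lemma SEGl (l : seq nat) a m al : (forall j, (j %% n) \notin l -> f j = f j.+1) ->
  (forall i, i < m -> (a + i) %% n \notin l) -> f a = al ->
  forall i, i <= m -> f (a + i) = al.
Proof.
move=> NC H fa; elim=> [|i IH] lim; first by rewrite addn0.
by rewrite addnS -NC ?IH // ?(ltnW lim) // H.
Qed.

Lemma modlt2 j : j < n + n -> (j %% n = j /\ j < n) \/ (j %% n = j - n /\ n <= j).
Proof.
move=> h; case: (ltnP j n) => hj.
  by left; rewrite modn_small.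
right; split => //.
have {1}-> : j = (j - n) + n by rewrite subnK.
rewrite modnDr modn_small //; lia.
Qed.

Lemma case2 c1 c2 : c1 < c2 -> c2 < n -> f c1 != f c1.+1 -> f c2 != f c2.+1 ->
  (forall j, (j %% n) \notin [:: c1; c2] -> f j = f j.+1) -> False.
Proof.
move=> h12 h2n ch1 ch2 NC.
have segA := SEGl (a:=c1.+1) (m:=c2-c1-1) (al:=f c1.+1) NC.
have {}segA : forall i, i <= c2 - c1 - 1 -> f (c1.+1 + i) = f c1.+1.
  apply: segA => // i hi; rewrite modn_small; last by lia.
  by rewrite !inE; lia.
have fc2 : f c2 = f c1.+1.
  have E : c1.+1 + (c2 - c1 - 1) = c2 by lia.
  by rewrite -{1}E segA.
have fc21 : f c2.+1 = ~~ f c1.+1.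
  by move: ch2; rewrite fc2; case: (f c1.+1); case: (f c2.+1).
have fc1n : f (c1 + n) = ~~ f c1.+1.
  by move: ch1; rewrite f_per; case: (f c1.+1); case: (f c1).
have segD := SEGl (a:=c2.+1) (m:=c1 + n - c2 - 1) (al:=~~ f c1.+1) NC.
have {}segD : forall i, i <= c1 + n - c2 - 1 -> f (c2.+1 + i) = ~~ f c1.+1.
  apply: segD => // i hi.
  have hj : c2.+1 + i < n + n by lia.
  by case: (modlt2 hj) => [[-> ?]|[-> ?]]; rewrite !inE; lia.
case E: (f c1.+1) segA segD => segA segD.
- apply: (K2comb (b:=c1.+1) (p:=c2-c1) (q:=n-(c2-c1))); try lia.
  + by move=> i hi; rewrite segA //; lia.
  + move=> i hi; have -> : c1.+1 + (c2 - c1) + i = c2.+1 + i by lia.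
    by rewrite segD //; lia.
- apply: (K2comb (b:=c2.+1) (p:=n-(c2-c1)) (q:=c2-c1)); try lia.
  + by move=> i hi; rewrite segD //; lia.
  + move=> i hi; have -> : c2.+1 + (n - (c2 - c1)) + i = (c1.+1 + i) + n by lia.
    by rewrite f_per segA //; lia.
Qed.


Lemma bneq (a b : bool) : a != b -> b = ~~ a.
Proof. by case: a; case: b. Qed.

Lemma case4 c1 c2 c3 c4 : c1 < c2 -> c2 < c3 -> c3 < c4 -> c4 < n ->
  f c1 != f c1.+1 -> f c2 != f c2.+1 -> f c3 != f c3.+1 -> f c4 != f c4.+1 ->
  (forall j, (j %% n) \notin [:: c1; c2; c3; c4] -> f j = f j.+1) -> False.
Proof.
move=> h12 h23 h34 h4n ch1 ch2 ch3 ch4 NC.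
set al := f c1.+1.
have segA := SEGl (a:=c1.+1) (m:=c2-c1-1) (al:=al) NC.
have {}segA : forall i, i <= c2 - c1 - 1 -> f (c1.+1 + i) = al.
  apply: segA => // i hi; rewrite modn_small; last by lia.
  by rewrite !inE; lia.
have fc2 : f c2 = al.
  have E : c1.+1 + (c2 - c1 - 1) = c2 by lia.
  by rewrite -{1}E segA.
have fc21 : f c2.+1 = ~~ al.
  by apply: bneq; rewrite -fc2.
have segB := SEGl (a:=c2.+1) (m:=c3-c2-1) (al:=~~ al) NC.
have {}segB : forall i, i <= c3 - c2 - 1 -> f (c2.+1 + i) = ~~ al.
  apply: segB => // i hi; rewrite modn_small; last by lia.
  by rewrite !inE; lia.
have fc3 : f c3 = ~~ al.
  have E : c2.+1 + (c3 - c2 - 1) = c3 by lia.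
  by rewrite -{1}E segB.
have fc31 : f c3.+1 = al.
  by rewrite -[al]negbK; apply: bneq; rewrite -fc3.
have segC := SEGl (a:=c3.+1) (m:=c4-c3-1) (al:=al) NC.
have {}segC : forall i, i <= c4 - c3 - 1 -> f (c3.+1 + i) = al.
  apply: segC => // i hi; rewrite modn_small; last by lia.
  by rewrite !inE; lia.
have fc4 : f c4 = al.
  have E : c3.+1 + (c4 - c3 - 1) = c4 by lia.
  by rewrite -{1}E segC.
have fc41 : f c4.+1 = ~~ al.
  by apply: bneq; rewrite -fc4.
have segD := SEGl (a:=c4.+1) (m:=c1 + n - c4 - 1) (al:=~~ al) NC.
have {}segD : forall i, i <= c1 + n - c4 - 1 -> f (c4.+1 + i) = ~~ al.
  apply: segD => // i hi.
  have hj : c4.+1 + i < n + n by lia.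
  by case: (modlt2 hj) => [[-> ?]|[-> ?]]; rewrite !inE; lia.
clearbody al; clear fc2 fc21 fc3 fc31 fc4 fc41 ch1 ch2 ch3 ch4.
case: al segA segB segC segD => segA segB segC segD.
- apply: (K4comb (b:=c1.+1) (p1:=c2-c1) (q1:=c3-c2) (p2:=c4-c3) (q2:=n-(c4-c1)));
    try lia.
  + by move=> i hi; rewrite segA //; lia.
  + move=> i hi; have -> : c1.+1 + (c2 - c1) + i = c2.+1 + i by lia.
    by rewrite segB //; lia.
  + move=> i hi; have -> : c1.+1 + (c2 - c1) + (c3 - c2) + i = c3.+1 + i by lia.
    by rewrite segC //; lia.
  + move=> i hi.
    have -> : c1.+1 + (c2 - c1) + (c3 - c2) + (c4 - c3) + i = c4.+1 + i by lia.
    by rewrite segD //; lia.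
- apply: (K4comb (b:=c2.+1) (p1:=c3-c2) (q1:=c4-c3) (p2:=n-(c4-c1)) (q2:=c2-c1));
    try lia.
  + by move=> i hi; rewrite segB //; lia.
  + move=> i hi; have -> : c2.+1 + (c3 - c2) + i = c3.+1 + i by lia.
    by rewrite segC //; lia.
  + move=> i hi; have -> : c2.+1 + (c3 - c2) + (c4 - c3) + i = c4.+1 + i by lia.
    by rewrite segD //; lia.
  + move=> i hi.
    have -> : c2.+1 + (c3 - c2) + (c4 - c3) + (n - (c4 - c1)) + i = (c1.+1 + i) + n
      by lia.
    by rewrite f_per segA //; lia.
Qed.


Lemma case0 : (forall j, f j = f j.+1) -> False.
Proof.
move=> C.
have fc : forall j, f j = f 0 by elim=> [|j IH] //; rewrite -C.
have Ev : v (0 + n) = v 0 by rewrite v_per.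
case E: (f 0).
- have H := covT (i:=0) E.
  have P : bprec X (v (0 + 1)) (v (0 + n)).
    by apply: (runT (m:=n)) => // [i _|]; [rewrite fc E | exact: n_gt0].
  rewrite Ev add0n in P.
  have := bprec_anti (mbv 0) (mbv 1) (hc_prec H) P.
  by move=> Q; move: (hc_neq H); rewrite Q eqxx.
- have H := covF (i:=0) E.
  have P : bprec X (v (0 + n)) (v (0 + 1)).
    by apply: (runF (m:=n)) => // [i _|]; [rewrite fc E | exact: n_gt0].
  rewrite Ev add0n in P.
  have := bprec_anti (mbv 1) (mbv 0) (hc_prec H) P.
  by move=> Q; move: (hc_neq H); rewrite Q eqxx.
Qed.

Lemma main_sec : 6 <= non_flow_count e X s.
Proof.
rewrite /non_flow_count -size_filter.
set P := filter _ _.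
have memP : forall i, (i \in P) = (i < n) && (f i != f i.+1).
  by move=> i; rewrite mem_filter mem_iota /= andbC add0n.
have sortP : sorted ltn P by apply: sorted_filter; [exact: ltn_trans | exact: iota_ltn_sorted].
have NC : forall j, (j %% n) \notin P -> f j = f j.+1.
  move=> j; rewrite memP ltn_pmod ?n_gt0 //= negbK => /eqP E.
  by rewrite (f_mod j) (f_mod j.+1) -modS -(f_mod (j %% n).+1).
have par : ~~ odd (size P).
  rewrite size_filter.
  have -> : count (fun i => edge_fwd e X s i != edge_fwd e X s i.+1) (iota 0 n)
     = count (fun i => f i != f i.+1) (iota 0 n) by [].
  by rewrite parity -[n]add0n f_per eqxx.
clearbody P.
case: P memP sortP NC par => [|c1 [|c2 [|c3 [|c4 [|c5 [|c6 l]]]]]] memP sortP NC par //.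
- by exfalso; apply: case0 => j; apply: NC.
- exfalso; move: sortP => /= /andP[h12 _].
  have := memP c1; rewrite !inE eqxx /= => /esym/andP[_ ch1].
  have := memP c2; rewrite !inE eqxx orbT /= => /esym/andP[c2n ch2].
  exact: case2 h12 c2n ch1 ch2 NC.
- exfalso; move: sortP => /= /and4P[h12 h23 h34 _].
  have := memP c1; rewrite !inE eqxx /= => /esym/andP[_ ch1].
  have := memP c2; rewrite !inE eqxx orbT /= => /esym/andP[_ ch2].
  have := memP c3; rewrite !inE eqxx !orbT /= => /esym/andP[_ ch3].
  have := memP c4; rewrite !inE eqxx !orbT /= => /esym/andP[c4n ch4].
  exact: case4 h12 h23 h34 c4n ch1 ch2 ch3 ch4 NC.
Qed.

End Bic.

Theorem lemma2 (T : finType) (e : rel T) (X : {set T}) :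
  bipartite_graph e X ->
  domino_free e ->
  ~ has_universal_vertex e X ->
  forall s : seq {set T}, hcycle e X s -> 6 <= non_flow_count e X s.
Proof. by move=> bip dom _ s hc; apply: main_sec. Qed.
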